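(* Let $s\in\mathbb{N}$, let $A=(a_{ij})\in\mathbb{R}^{s\times s}$ be weakly positive definite, let $\mu\in\{1,2\}$ and $h_t>0$. Define $\mathcal{A}:\mathbf{V}\to\mathbf{V}^*$ by $$\langle \mathcal{A}\mathbf{u},\mathbf{v}\rangle=\sum_{i=1}^s\langle u_i,v_i\rangle_{L^2}+h_t^{\mu}\sum_{i=1}^s\sum_{j=1}^s a_{ij}\langle u_j,v_i\rangle_{H_0^1},\qquad \mathbf{u},\mathbf{v}\in\mathbf{V},$$ i.e. $\mathcal{A}=\mathbb{I}^{s\times s}\otimes\mathcal{I}+h_t^{\mu}A\otimes\mathcal{K}$ in weak form. Then $\mathcal{A}$ is an isomorphism from $\mathbf{V}$ onto $\mathbf{V}^*$, and there are finite constants $c_1,c_2$, depending only on $A$ and $s$ (in particular independent of $h_t$), such that $$\|\mathcal{A}\|_{\mathcal{L}(\mathbf{V},\mathbf{V}^* )}\le c_1,\qquad \|\mathcal{A}^{-1}\|_{\mathcal{L}(\mathbf{V}^*,\mathbf{V})}\le c_2.$$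
   Context: A real matrix $A\in\mathbb{R}^{s\times s}$ is called weakly positive definite if there exists a symmetric positive definite matrix $C\in\mathbb{R}^{s\times s}$ such that $CA$ is positive definite, i.e. $x^TCAx>0$ for all nonzero $x\in\mathbb{R}^s$. Let $\Omega\subset\mathbb{R}^d$ be a bounded polygonal domain whose boundary is partitioned into disjoint parts $\partial\Omega_N,\partial\Omega_D$. Let $\alpha,\beta\in L^\infty(\Omega)$ with $\alpha>0$ (bounded below by a positive constant) and $\beta\ge 0$ on $\Omega$. Define $\langle u,v\rangle_{L^2}=\int_\Omega uv$ and $\langle u,v\rangle_{H_0^1}=\int_\Omega(\alpha\nabla u\cdot\nabla v+\beta uv)$ (possibly only a semi-inner product), with $\|u\|_{H_0^1}^2=\langle u,u\rangle_{H_0^1}$; this is the weak form of $\mathcal{K}u=-\nabla\cdot(\alpha\nabla u)+\beta u$. Let $V$ be the space of $H^1(\Omega)$ functions vanishing on $\partial\Omega_D$, with inner product $\langle u,v\rangle_V=\langle u,v\rangle_{L^2}+h_t^{\mu}\langle u,v\rangle_{H_0^1}$ and norm $\|u\|_V^2=\|u\|_{L^2}^2+h_t^{\mu}\|u\|_{H_0^1}^2$. Let $\mathbf{V}=V^s$ with $\langle\mathbf{u},\mathbf{v}\rangle_{\mathbf{V}}=\sum_{i=1}^s\langle u_i,v_i\rangle_V$ and induced norm, and let $\mathbf{V}^*$ be its dual with the dual norm. *)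

(* Defs.v *)
From HB Require Import structures.
From mathcomp Require Import all_boot all_order all_algebra.
From mathcomp Require Import reals.
Set Implicit Arguments. Unset Strict Implicit. Unset Printing Implicit Defensive.
Import Order.TTheory GRing.Theory Num.Theory.
Local Open Scope ring_scope.

Section Defs.
Variable R : realType.

Definition weakly_pos_def (s : nat) (A : 'M[R]_s) : Prop :=
  exists C : 'M[R]_s,
    C^T = C /\
    (forall x : 'cV[R]_s, x != 0 -> 0 < (x^T *m C *m x) 0 0) /\
    (forall x : 'cV[R]_s, x != 0 -> 0 < (x^T *m (C *m A) *m x) 0 0).

Definition sym_bilinear (V : lmodType R) (b : V -> V -> R) : Prop :=
  (forall u v, b u v = b v u) /\
  (forall (a : R) (u w v : V), b (a *: u + w) v = a * b u v + b w v).

Definition Vnorm (V : lmodType R) (l2 h1 : V -> V -> R) (ht : R) (mu : nat)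
  (u : V) : R := Num.sqrt (l2 u u + ht ^+ mu * h1 u u).

(* The abstract setting of the paper: V is a real vector space carrying the
   L^2 inner product l2 and the (semi-)inner product h1 = <.,.>_{H_0^1}
   (a(x) grad u . grad v + beta u v), and V is complete for ||.||_V
   (V = {u in H^1(Omega) : u = 0 on dOmega_D} is a Hilbert space). *)
Definition hilbert_setting (V : lmodType R) (l2 h1 : V -> V -> R)
  (ht : R) (mu : nat) : Prop :=
  [/\ sym_bilinear l2, sym_bilinear h1,
      (forall u : V, u != 0 -> 0 < l2 u u),
      (forall u : V, 0 <= h1 u u) &
      (forall un : nat -> V,
         (forall e : R, 0 < e -> exists N : nat, forall m n : nat,
            (N <= m)%N -> (N <= n)%N -> Vnorm l2 h1 ht mu (un m - un n) < e) ->
         exists v : V, forall e : R, 0 < e -> exists N : nat, forall n : nat,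
            (N <= n)%N -> Vnorm l2 h1 ht mu (un n - v) < e)].

Definition VSnorm (V : lmodType R) (s : nat) (l2 h1 : V -> V -> R) (ht : R)
  (mu : nat) (u : 'I_s -> V) : R :=
  Num.sqrt (\sum_(i < s) Vnorm l2 h1 ht mu (u i) ^+ 2).

Definition opA (V : lmodType R) (s : nat) (A : 'M[R]_s) (l2 h1 : V -> V -> R)
  (ht : R) (mu : nat) (u v : 'I_s -> V) : R :=
  \sum_(i < s) l2 (u i) (v i)
  + ht ^+ mu * \sum_(i < s) \sum_(j < s) A i j * h1 (u j) (v i).

Definition in_dual (V : lmodType R) (s : nat) (l2 h1 : V -> V -> R) (ht : R)
  (mu : nat) (f : ('I_s -> V) -> R) : Prop :=
  (forall (a : R) (u w : 'I_s -> V),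
      f (fun i => a *: u i + w i) = a * f u + f w) /\
  (exists M : R, forall v, `|f v| <= M * VSnorm l2 h1 ht mu v).

End Defs.

(* Main.v *)
Require Import Defs.
From HB Require Import structures.
From mathcomp Require Import all_boot all_order all_algebra.
From mathcomp Require Import reals.
From mathcomp Require Import boolp classical_sets functions.
From mathcomp Require Import ring lra.
Import Order.TTheory GRing.Theory Num.Theory.
Local Open Scope ring_scope.

Module Aux.
Set Implicit Arguments. Unset Strict Implicit.


Section Bil.
Variables (R : realType) (W : lmodType R) (g : W -> W -> R).
Hypothesis gB : sym_bilinear g.

Lemma g0l v : g 0 v = 0.
Proof.
case: gB => _ gL; have := gL (-1) 0 0 v.
by rewrite scaler0 addr0 mulN1r addNr.
Qed.
Lemma gDl u w v : g (u + w) v = g u v + g w v.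
Proof. by case: gB => _ gL; have := gL 1 u w v; rewrite scale1r mul1r. Qed.
Lemma gZl a u v : g (a *: u) v = a * g u v.
Proof. by case: gB => _ gL; rewrite -[a *: u]addr0 gL g0l addr0. Qed.
Lemma gNl u v : g (- u) v = - g u v.
Proof. by rewrite -scaleN1r gZl mulN1r. Qed.
Lemma gBl u w v : g (u - w) v = g u v - g w v.
Proof. by rewrite gDl gNl. Qed.
Lemma gC u v : g u v = g v u.
Proof. by case: gB. Qed.
Lemma g0r v : g v 0 = 0.
Proof. by rewrite gC g0l. Qed.
Lemma gDr u w v : g v (u + w) = g v u + g v w.
Proof. by rewrite gC gDl !(gC v). Qed.
Lemma gZr a u v : g v (a *: u) = a * g v u.
Proof. by rewrite gC gZl gC. Qed.
Lemma gNr u v : g v (- u) = - g v u.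
Proof. by rewrite gC gNl gC. Qed.
Lemma gBr u w v : g v (u - w) = g v u - g v w.
Proof. by rewrite gDr gNr. Qed.
Lemma gsuml (I : Type) (r : seq I) (P : pred I) (F : I -> W) v :
  g (\sum_(i <- r | P i) F i) v = \sum_(i <- r | P i) g (F i) v.
Proof.
elim/big_rec2: _; first by rewrite g0l.
by move=> i y x _ <-; rewrite gDl.
Qed.
Lemma gsumr (I : Type) (r : seq I) (P : pred I) (F : I -> W) v :
  g v (\sum_(i <- r | P i) F i) = \sum_(i <- r | P i) g v (F i).
Proof. by rewrite gC gsuml; apply: eq_bigr => i _; rewrite gC. Qed.

Hypothesis gP : forall x, 0 <= g x x.

Lemma gpar x y : g (x + y) (x + y) <= 2 * g x x + 2 * g y y.
Proof.
have := gP (x - y).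
rewrite !gDl !gDr !gNl !gNr (gC y x). lra.
Qed.

Lemma gCS x y : g x y ^+ 2 <= g x x * g y y.
Proof.
have h1 := gP (g y y *: x - g x y *: y).
have h2 := gP (g x y *: x - g x x *: y).
have h3 t := gP (x - t *: y).
move: h1 h2; rewrite !gDl !gDr !gNl !gNr !gZl !gZr (gC y x) => h1 h2.
have hx := gP x; have hy := gP y.
have [yp|y0] := boolP (0 < g y y).
  have : 0 <= g y y * (g x x * g y y - g x y ^+ 2) by nra.
  rewrite pmulr_rge0 //; lra.
have {}y0 : g y y = 0 by lra.
have [xp|x0] := boolP (0 < g x x).
  have : 0 <= g x x * (g x x * g y y - g x y ^+ 2) by nra.
  rewrite pmulr_rge0 //; lra.
have {}x0 : g x x = 0 by lra.
have := h3 (g x y); rewrite !gDl !gDr !gNl !gNr !gZl !gZr (gC y x) x0 y0; nra.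
Qed.

End Bil.


Section Mx.
Variable R : realType.

Definition psdf (W : lmodType R) (g : W -> W -> R) := forall x, 0 <= g x x.

Lemma sum_ge0 n (F : 'I_n -> R) : (forall i, 0 <= F i) -> 0 <= \sum_i F i.
Proof. by move=> h; apply: sumr_ge0 => i _. Qed.

Lemma Kbound n (b : 'I_n -> R) : exists K : R, 0 <= K /\
  forall (W : lmodType R) (g : W -> W -> R), sym_bilinear g -> psdf g ->
  forall u : 'I_n -> W,
   g (\sum_k b k *: u k) (\sum_k b k *: u k) <= K * \sum_k g (u k) (u k).
Proof.
elim: n b => [|n IH] b.
  by exists 0; split => // W g gB gP u; rewrite !big_ord0 (g0l gB) mul0r.
have [K [K0 HK]] := IH (fun k => b (lift ord0 k)).
exists (2 * b ord0 ^+ 2 + 2 * K); split; first by nra.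
move=> W g gB gP u; rewrite !big_ord_recl.
have h1 := gpar gB gP (b ord0 *: u ord0)
  (\sum_(i<n) b (lift ord0 i) *: u (lift ord0 i)).
have h2 := HK W g gB gP (fun k => u (lift ord0 k)).
rewrite (gZl gB) (gZr gB) in h1.
have h3 : 0 <= \sum_(i < n) g (u (lift ord0 i)) (u (lift ord0 i)).
  by apply: sum_ge0 => i; apply: gP.
have h4 := gP (u ord0).
have h5 : 0 <= b ord0 ^+ 2 by exact: sqr_ge0.
simpl in h2. nra.
Qed.

End Mx.


Section Mx2.
Variable R : realType.

Definition qf n (P : 'M[R]_n) (W : lmodType R) (g : W -> W -> R) (u : 'I_n -> W) :=
  \sum_i \sum_k P i k * g (u i) (u k).

Definition rmul (a b : R^o) : R := a * b.

Lemma rmulB : sym_bilinear rmul.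
Proof.
split; first by move=> u v; rewrite /rmul mulrC.
by move=> a u w v; rewrite /rmul /= mulrDl mulrA.
Qed.

Lemma rmulP : psdf rmul.
Proof. by move=> x; rewrite /rmul; nra. Qed.

Lemma mxquad n (P : 'M[R]_n) (x : 'cV[R]_n) :
  (x^T *m P *m x) 0 0 = qf P rmul (fun i => x i 0 : R^o).
Proof.
rewrite /qf /rmul !mxE.
under eq_bigr do rewrite !mxE big_distrl /=.
rewrite exchange_big /=; apply: eq_bigr => i _; apply: eq_bigr => k _.
by rewrite !mxE; ring.
Qed.

Section Schur.
Variables (n : nat) (P : 'M[R]_n.+1).
Let p := P ord0 ord0.
Definition schb (k : 'I_n) := (P ord0 (lift ord0 k) + P (lift ord0 k) ord0) / 2.
Local Notation b := schb.
Definition schur := \matrix_(i, k) (P (lift ord0 i) (lift ord0 k) - b i * b k / p).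

Lemma schur_id (W : lmodType R) (g : W -> W -> R) (gB : sym_bilinear g)
  (u : 'I_n.+1 -> W) : p != 0 ->
  qf P g u = p * g (u ord0 + p^-1 *: \sum_k b k *: u (lift ord0 k))
                   (u ord0 + p^-1 *: \sum_k b k *: u (lift ord0 k))
             + qf schur g (fun k => u (lift ord0 k)).
Proof.
move=> p0.
set u' := fun k => u (lift ord0 k).
set z := \sum_k b k *: u' k.
have E1 : g (u ord0) z = \sum_k b k * g (u ord0) (u' k).
  by rewrite (gsumr gB); apply: eq_bigr => k _; rewrite (gZr gB).
have E2 : g z z = \sum_i \sum_k b i * b k * g (u' i) (u' k).
  rewrite (gsuml gB); apply: eq_bigr => i _; rewrite (gZl gB) (gsumr gB) big_distrr.
  by apply: eq_bigr => k _; rewrite (gZr gB) /=; ring.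
have E3 : \sum_k b k * g (u ord0) (u' k) =
   (\sum_k P ord0 (lift ord0 k) * g (u ord0) (u' k)
    + \sum_k P (lift ord0 k) ord0 * g (u' k) (u ord0)) / 2.
  rewrite -big_split big_distrl /=; apply: eq_bigr => k _.
  by rewrite /b (gC gB (u' k)); field.
have E4 : qf schur g u' = \sum_i \sum_k P (lift ord0 i) (lift ord0 k) * g (u' i) (u' k)
     - p^-1 * \sum_i \sum_k b i * b k * g (u' i) (u' k).
  rewrite /qf big_distrr -sumrB /=; apply: eq_bigr => i _.
  rewrite big_distrr -sumrB /=; apply: eq_bigr => k _.
  by rewrite mxE; field.
have E5 : qf P g u = p * g (u ord0) (u ord0)
   + \sum_k P ord0 (lift ord0 k) * g (u ord0) (u' k)
   + \sum_k P (lift ord0 k) ord0 * g (u' k) (u ord0)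
   + \sum_i \sum_k P (lift ord0 i) (lift ord0 k) * g (u' i) (u' k).
  rewrite /qf big_ord_recl big_ord_recl /= -/p.
  under [X in _ + X = _]eq_bigr do rewrite big_ord_recl.
  by rewrite big_split /=; ring.
rewrite E5 E4 (gDl gB) !(gDr gB) !(gZl gB) !(gZr gB) (gC gB z) E1 E2 E3.
by field.
Qed.

End Schur.

Lemma liftne0 m (k : 'I_m) : (lift ord0 k == ord0) = false.
Proof. by apply/negbTE; rewrite eq_sym neq_lift. Qed.

Lemma coerc n (P : 'M[R]_n) :
  (forall x : 'cV[R]_n, x != 0 -> 0 < (x^T *m P *m x) 0 0) ->
  exists lam : R, 0 < lam /\ forall (W : lmodType R) (g : W -> W -> R),
    sym_bilinear g -> psdf g -> forall u : 'I_n -> W,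
    lam * \sum_i g (u i) (u i) <= qf P g u.
Proof.
elim: n P => [|n IH] P HP.
  exists 1; split => // W g gB gP u.
  by rewrite /qf !big_ord0 mulr0.
set p := P ord0 ord0.
have pp : 0 < p.
  pose x : 'cV[R]_n.+1 := \col_i (i == ord0)%:R.
  have x0 : x != 0.
    by apply/negP => /eqP /matrixP /(_ ord0 ord0); rewrite !mxE eqxx => /eqP; rewrite oner_eq0.
  have := HP x x0; rewrite mxquad /qf /rmul big_ord_recl big_ord_recl.
  rewrite big1; last by move=> k _; rewrite !mxE liftne0 /=; ring.
  rewrite big1; last first.
    move=> i _; apply: big1 => k _.
    by rewrite !mxE liftne0 /=; ring.
  by rewrite !mxE eqxx /= !addr0 mulr1 mulr1.
have p0 : p != 0 by rewrite gt_eqF.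
have HS : forall x : 'cV[R]_n, x != 0 -> 0 < (x^T *m schur P *m x) 0 0.
  move=> x' x'0.
  pose x : 'cV[R]_n.+1 := \col_i (match unlift ord0 i with
      Some k => x' k 0 | None => - p^-1 * \sum_k schb P k * x' k 0 end).
  have ex : (fun k => (x (lift ord0 k) 0 : R^o)) = (fun k => x' k 0).
    by apply: funext => k; rewrite mxE liftK.
  have x0 : x != 0.
    apply/negP => /eqP xe; move/negP: x'0; apply; apply/eqP/matrixP => k j.
    rewrite (ord1 j) mxE.
    have := congr1 (fun f => f k) ex; rewrite /= xe mxE => <-. by [].
  have := HP x x0; rewrite mxquad (schur_id rmulB _ p0) -/p ex mxquad.
  suff -> : (x ord0 0 : R^o) + p^-1 *: \sum_k schb P k *: (x (lift ord0 k) 0 : R^o) = 0.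
    by rewrite /rmul mulr0 mulr0 add0r.
  have ex2 : \sum_k schb P k *: (x (lift ord0 k) 0 : R^o) = \sum_k schb P k * x' k 0.
    by apply: eq_bigr => k _; rewrite mxE liftK.
  rewrite ex2 mxE unlift_none.
  by rewrite /GRing.scale /= mulNr addNr.
have [l2 [l2p Hl2]] := IH _ HS.
have [K [K0 HK]] := Kbound (schb P).
set c := 2 * (p^-1) ^+ 2 * K.
have c0 : 0 <= c by rewrite /c; apply: mulr_ge0 => //; apply: mulr_ge0 => //; apply: sqr_ge0.
set lam := Num.min (p / 2) (l2 / (1 + c)).
have lp : 0 < lam by rewrite lt_min; apply/andP; split; apply: divr_gt0 => //; lra.
have l1 : lam <= p / 2 by have := le_min lam (p/2) (l2/(1+c)); rewrite lexx => /esym /andP[].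
have l3 : lam <= l2 / (1 + c) by have := le_min lam (p/2) (l2/(1+c)); rewrite lexx => /esym /andP[].
have l4 : lam * (1 + c) <= l2 by rewrite -ler_pdivlMr //; lra.
exists lam; split => // W g gB gP u.
rewrite (schur_id gB _ p0) -/p big_ord_recl /=.
set u' := fun k => u (lift ord0 k).
set z := \sum_k schb P k *: u' k.
set w := u ord0 + p^-1 *: z.
have h1 := Hl2 W g gB gP u'.
have h2 := HK W g gB gP u'.
have h3 : g (u ord0) (u ord0) <= 2 * g w w + 2 * ((p^-1) ^+ 2 * g z z).
  have := gpar gB gP w (- (p^-1 *: z)).
  by rewrite /w addrK (gNl gB) (gNr gB) (gZl gB) (gZr gB) opprK mulrA -expr2.
set S := \sum_(i < n) g (u' i) (u' i) in h1 h2 *.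
have S0 : 0 <= S by apply: sum_ge0 => i; apply: gP.
have gw := gP w.
have gz : (p^-1) ^+ 2 * g z z <= (p^-1) ^+ 2 * (K * S).
  by apply: ler_wpM2l => //; apply: sqr_ge0.
have h4 : g (u ord0) (u ord0) <= 2 * g w w + c * S by rewrite /c; nra.
have h5 : lam * g (u ord0) (u ord0) <= lam * (2 * g w w + c * S) by apply: ler_wpM2l => //; lra.
have h6 : lam * (2 * g w w) <= p * g w w by nra.
have h7 : lam * (1 + c) * S <= l2 * S by nra.
change (\sum_(i < n) g (u (lift ord0 i)) (u (lift ord0 i))) with S.
nra.
Qed.

End Mx2.


Section Hil.
Variables (R : realType) (W : lmodType R) (ip : W -> W -> R).
Hypotheses (ipB : sym_bilinear ip) (ipP : psdf ip).

Definition nn (x : W) := Num.sqrt (ip x x).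

Lemma nn_ge0 x : 0 <= nn x. Proof. exact: sqrtr_ge0. Qed.
Lemma nn_sq x : nn x ^+ 2 = ip x x. Proof. exact: sqr_sqrtr (ipP x). Qed.

Lemma ip_abs x y : `|ip x y| <= nn x * nn y.
Proof.
have h := gCS ipB ipP x y.
rewrite /nn -sqrtrM ?ipP // -sqrtr_sqr ler_sqrt //.
by apply: mulr_ge0; apply: ipP.
Qed.

Lemma ip_le x y : ip x y <= nn x * nn y.
Proof. exact: le_trans (ler_norm _) (ip_abs x y). Qed.

Lemma sq_le (a b : R) : 0 <= b -> a ^+ 2 <= b ^+ 2 -> a <= b.
Proof. move=> b0 h; nra. Qed.

Lemma nn_tri x y : nn (x + y) <= nn x + nn y.
Proof.
apply: sq_le; first by apply: addr_ge0; apply: nn_ge0.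
rewrite nn_sq (gDl ipB) !(gDr ipB) (gC ipB y x).
have := ip_le x y; have := nn_sq x; have := nn_sq y. nra.
Qed.

Lemma nnN x : nn (- x) = nn x.
Proof. by rewrite /nn (gNl ipB) (gNr ipB) opprK. Qed.

Lemma nnB x y : nn (x - y) = nn (y - x).
Proof. by rewrite -nnN opprB. Qed.

Lemma nn_lt x e : 0 < e -> ip x x < e ^+ 2 -> nn x < e.
Proof. move=> e0; rewrite -nn_sq => h; have := nn_ge0 x; nra. Qed.

Definition linf (f : W -> R) := forall a u w, f (a *: u + w) = a * f u + f w.

Lemma lin0 f : linf f -> f 0 = 0.
Proof. by move=> fl; have := fl (-1) 0 0; rewrite scaler0 addr0 mulN1r addNr. Qed.
Lemma linD f : linf f -> forall u w, f (u + w) = f u + f w.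
Proof. by move=> fl u w; have := fl 1 u w; rewrite scale1r mul1r. Qed.
Lemma linZ f : linf f -> forall a u, f (a *: u) = a * f u.
Proof. by move=> fl a u; rewrite -[a *: u]addr0 fl lin0 // addr0. Qed.
Lemma linN f : linf f -> forall u, f (- u) = - f u.
Proof. by move=> fl u; rewrite -scaleN1r (linZ fl) mulN1r. Qed.

Definition cauchyW (un : nat -> W) := forall e, 0 < e -> exists N, forall m n,
  (N <= m)%N -> (N <= n)%N -> ip (un m - un n) (un m - un n) < e.
Definition limW (un : nat -> W) v := forall e, 0 < e -> exists N, forall n,
  (N <= n)%N -> ip (un n - v) (un n - v) < e.

Hypothesis ipC : forall un, cauchyW un -> exists v, limW un v.

Lemma limW_nn un v : limW un v -> forall e, 0 < e -> exists N, forall n,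
  (N <= n)%N -> nn (un n - v) < e.
Proof.
move=> h e e0; have [N HN] := h (e ^+ 2) (exprn_gt0 2 e0).
by exists N => n Nn; apply: nn_lt => //; apply: HN.
Qed.

Lemma archi_inv (e : R) : 0 < e -> exists N : nat, forall n, (N <= n)%N ->
  (n.+1%:R)^-1 < e.
Proof.
move=> e0; exists (Num.Def.archi_bound e^-1) => n Nn.
have ie : 0 < e^-1 by rewrite invr_gt0.
have h1 := archi_boundP (ltW ie).
have h2 : (Num.Def.archi_bound e^-1)%:R <= n%:R :> R by rewrite ler_nat.
have h3 : n%:R < n.+1%:R :> R by rewrite ltr_nat.
set x := n.+1%:R : R.
have xp : 0 < x by rewrite /x ltr0n.
have h4 : x^-1 * x = 1 by rewrite mulVf // gt_eqF.
have h5 : e^-1 * e = 1 by rewrite mulVf // gt_eqF.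
have h6 : 0 < x^-1 by rewrite invr_gt0.
have h7 : 1 < x * e.
  have : e^-1 < x by lra.
  move=> h; nra.
have h8 : x^-1 * (x * e) = e by rewrite mulrA h4 mul1r.
by rewrite -h8 -[X in X < _]mulr1 ltr_pM2l.
Qed.

Lemma riesz f : linf f -> (exists K, forall v, `|f v| <= K * nn v) ->
  exists u, forall v, ip u v = f v.
Proof.
move=> fl [K0 fK0].
pose K : R := `|K0|.
have K0p : 0 <= K by apply: normr_ge0.
have fK : forall v, `|f v| <= K * nn v.
  move=> v; apply: (le_trans (fK0 v)); apply: ler_wpM2r; first exact: nn_ge0.
  exact: ler_norm.
pose J v := ip v v - 2 * f v.
have Jlb : forall v, - K ^+ 2 <= J v.
  move=> v; rewrite /J -nn_sq; have := fK v; have := ler_norm (f v).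
  have := sqr_ge0 (nn v - K); nra.
pose E : set R := fun y => exists v, J v = y.
have hi : has_inf E.
  split; first by exists (J 0); exists 0.
  by exists (- K ^+ 2) => y [v <-].
set m := inf E.
have mJ : forall v, m <= J v by move=> v; apply: (ge_inf (proj2 hi)); exists v.
have seq : forall k : nat, exists v, J v < m + (k.+1%:R)^-1.
  move=> k; have ik : 0 < (k.+1%:R : R)^-1 by rewrite invr_gt0 ltr0Sn.
  have [y [v <-] hy] := inf_adherent ik hi.
  by exists v.
have [vs Hvs] := choice seq.
have par : forall a b, ip (a - b) (a - b) =
    2 * J a + 2 * J b - 4 * J (2^-1 *: (a + b)).
  move=> a b; rewrite /J (linZ fl) (linD fl).
  rewrite !(gDl ipB) !(gDr ipB) !(gZl ipB) !(gZr ipB) !(gDl ipB) !(gDr ipB).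
  rewrite !(gNl ipB) !(gNr ipB) (gC ipB b a).
  by field.
have cau : cauchyW vs.
  move=> e e0.
  have e4 : 0 < e / 4 by lra.
  have [N HN] := archi_inv e4.
  exists N => a b Na Nb.
  rewrite par.
  have := mJ (2^-1 *: (vs a + vs b)).
  have := Hvs a; have := Hvs b; have := HN a Na; have := HN b Nb.
  move=> h1 h2 h3 h4 h5.
  set A := J (vs a) in h3 h4 *. set B := J (vs b) in h3 *. set C := J _ in h5 *.
  set ia := a.+1%:R^-1 in h2 h4. set ib := b.+1%:R^-1 in h1 h3. lra.
have [u Hu] := ipC cau.
have Jmin : J u <= m.
  apply/ler_addgt0Pr => e e0.
  set L := 2 * (nn u + K) + 1.
  have L0 : 0 < L by rewrite /L; have := nn_ge0 u; lra.
  have e2 : 0 < e / 2 by lra.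
  have [N1 HN1] := limW_nn Hu (divr_gt0 e2 L0).
  have [N2 HN2] := archi_inv e2.
  set n := maxn N1 N2.
  have h1 := HN1 n (leq_maxl _ _); have h2 := HN2 n (leq_maxr _ _).
  have h3 := Hvs n.
  set t := vs n - u in h1.
  have id : J u = J (vs n) - 2 * ip t u - ip t t + 2 * f t.
    have idg : forall t' u', J u' = J (t' + u') - 2 * ip t' u' - ip t' t' + 2 * f t'.
      by move=> t' u'; rewrite /J (linD fl) !(gDl ipB) !(gDr ipB) (gC ipB u' t'); ring.
    by rewrite (idg t u) /t subrK.
  have h4 := ip_abs t u; have h5 := fK t.
  have h6 := ler_norm (- ip t u); have h7 := ler_norm (f t).
  rewrite normrN in h6.
  have h8 := ipP t.
  have h9 : nn t * L < e / 2 by rewrite -ltr_pdivlMr.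
  have h10 := nn_ge0 u; have h11 := nn_ge0 t.
  rewrite /L in h9.
  have h12 : 2 * (nn t * nn u) + 2 * (K * nn t) <= e / 2 by nra.
  rewrite id; clear id.
  set ia := n.+1%:R^-1 in h2 h3.
  set P1 := nn t * nn u in h4 h12. set P2 := K * nn t in h5 h12.
  set A := J (vs n) in h3 *.
  lra.
exists u => v.
set c := ip u v - f v.
set r := (ip v v + 1)^-1.
have vp := ipP v.
have r0 : 0 < r by rewrite /r invr_gt0; lra.
have rv : r * ip v v <= 1.
  rewrite /r -[X in _ <= X](@mulVf _ (ip v v + 1)); last by rewrite gt_eqF //; lra.
  apply: ler_wpM2l; [exact: ltW | lra].
have h := mJ (u + (- c * r) *: v).
have e : J (u + (- c * r) *: v) = J u + 2 * (- c * r) * c + (- c * r) ^+ 2 * ip v v.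
  rewrite /J (linD fl) (linZ fl) !(gDl ipB) !(gDr ipB) !(gZl ipB) !(gZr ipB) (gC ipB v u) /c.
  ring.
rewrite e in h.
have h2 : 0 <= - c ^+ 2 * r.
  have h3 : c ^+ 2 * r * (r * ip v v) <= c ^+ 2 * r.
    rewrite -[X in _ <= X]mulr1; apply: ler_wpM2l => //.
    by apply: mulr_ge0 => //; [apply: sqr_ge0 | apply: ltW].
  nra.
have : c ^+ 2 <= 0.
  by rewrite -(ler_pM2r r0) mul0r; lra.
move=> hc; apply/eqP; rewrite -subr_eq0; apply/eqP; rewrite -/c; nra.
Qed.

End Hil.


Lemma bernoulli (R : realType) (h : R) n : 0 <= h -> 1 + n%:R * h <= (1 + h) ^+ n.
Proof.
move=> h0; elim: n => [|n IH]; first by rewrite mul0r addr0 expr0.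
rewrite exprSr -[n.+1]addn1 natrD.
have : 0 <= n%:R * h * h by apply: mulr_ge0 => //; apply: mulr_ge0.
nra.
Qed.

Lemma geo (R : realType) (r eps : R) : 0 <= r -> r < 1 -> 0 < eps ->
  exists N : nat, r ^+ N < eps.
Proof.
move=> r0 r1 e0.
have [->|rn0] := eqVneq r 0; first by exists 1%N; rewrite expr1.
have rp : 0 < r by rewrite lt_def rn0.
set h := r^-1 - 1.
have rh : r * (1 + h) = 1 by rewrite /h addrC subrK mulfV.
have hp : 0 < h.
  rewrite /h subr_gt0.
  have : r * 1 < r * r^-1 by rewrite mulfV // mulr1.
  by rewrite ltr_pM2l.
have ie : 0 < eps^-1 by rewrite invr_gt0.
have q0 : 0 <= eps^-1 / h by apply: divr_ge0; apply: ltW.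
exists (Num.Def.archi_bound (eps^-1 / h)).
set N := Num.Def.archi_bound _.
have hN := archi_boundP q0.
have hB := bernoulli N (ltW hp).
set X := (1 + h) ^+ N in hB.
have rX : r ^+ N * X = 1 by rewrite /X -exprMn rh expr1n.
have hNh : eps^-1 < N%:R * h.
  by rewrite -ltr_pdivrMr.
have Xe : eps^-1 < X by lra.
have rN : 0 < r ^+ N by apply: exprn_gt0.
have ee : eps^-1 * eps = 1 by rewrite mulVf // gt_eqF.
have : r ^+ N * (eps^-1 * eps) < r ^+ N * (X * eps).
  by rewrite ltr_pM2l // ltr_pM2r.
by rewrite ee mulr1 mulrA rX mul1r.
Qed.

Section LM.
Variables (R : realType) (W : lmodType R) (ip : W -> W -> R).
Hypotheses (ipB : sym_bilinear ip) (ipP : psdf ip) (ipD : forall x, ip x x = 0 -> x = 0).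
Hypothesis ipC : forall un, cauchyW ip un -> exists v, limW ip un v.

Local Notation nn := (nn ip).

Lemma laxmilgram (b : W -> W -> R) (f : W -> R) (alpha M K : R) :
  (forall a u w v, b (a *: u + w) v = a * b u v + b w v) ->
  (forall u, linf (b u)) ->
  (forall u v, `|b u v| <= M * nn u * nn v) ->
  0 < alpha -> alpha <= M ->
  (forall u, alpha * ip u u <= b u u) ->
  linf f -> (forall v, `|f v| <= K * nn v) ->
  exists u, forall v, b u v = f v.
Proof.
move=> bl br bM a0 aM bc fl fK.
have M0 : 0 < M by lra.
set rho := alpha / M ^+ 2.
have rho0 : 0 < rho by apply: divr_gt0 => //; apply: exprn_gt0.
have bB : forall u w v, b (u - w) v = b u v - b w v.
  by move=> u w v; have := bl (-1) w u v; rewrite scaleN1r mulN1r addrC => ->; ring.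
have ex : forall w, exists y, forall v, ip y v = ip w v - rho * (b w v - f v).
  move=> w; apply: (riesz ipB ipP ipC).
    move=> c u x; rewrite (gDr ipB) (gZr ipB) br fl; ring.
  exists (nn w + rho * M * nn w + rho * K) => v.
  have h1 := ip_abs ipB ipP w v; have h2 := bM w v; have h3 := fK v.
  have h4 : `|ip w v - rho * (b w v - f v)| <= `|ip w v| + rho * (`|b w v| + `|f v|).
    apply: (le_trans (ler_normB _ _)); rewrite normrM (gtr0_norm rho0).
    apply: lerD => //; apply: ler_wpM2l; [exact: ltW | exact: ler_normB].
  have h5 : rho * (`|b w v| + `|f v|) <= rho * (M * nn w * nn v + K * nn v).
    apply: ler_wpM2l; [exact: ltW | exact: lerD].
  apply: (le_trans h4); nra.
have [Phi HPhi] := choice ex.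
set q := 1 - alpha ^+ 2 / M ^+ 2.
have q1 : q < 1.
  rewrite /q; have : 0 < alpha ^+ 2 / M ^+ 2 by apply: divr_gt0; apply: exprn_gt0.
  lra.
have q0 : 0 <= q.
  rewrite /q subr_ge0 ler_pdivrMr ?exprn_gt0 // mul1r.
  by rewrite ler_pXn2r // ?nnegrE; apply: ltW.
have contr : forall w w', ip (Phi w - Phi w') (Phi w - Phi w')
      <= q * ip (w - w') (w - w').
  move=> w w'.
  set d := w - w'; set e := Phi w - Phi w'.
  set t := d - e.
  have ht : forall v, ip t v = rho * b d v.
    move=> v; rewrite /t /e /d !(gBl ipB) !HPhi bB; ring.
  have Nt : ip t t <= (rho * M) ^+ 2 * ip d d.
    have h1 : ip t t <= rho * M * nn d * nn t.
      rewrite ht -mulrA -mulrA ler_pM2l // mulrA.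
      exact: le_trans (ler_norm _) (bM d t).
    have hd := nn_ge0 ip d; have htt := nn_ge0 ip t.
    rewrite -!(nn_sq ipP) in h1 *.
    have h2 : nn t <= rho * M * nn d.
      have [->|tp] := eqVneq (nn t) 0; first by apply: mulr_ge0 => //; apply: mulr_ge0; apply: ltW.
      have tp' : 0 < nn t by rewrite lt_def tp htt.
      rewrite -(ler_pM2r tp'); nra.
    have : 0 <= rho * M * nn d by apply: mulr_ge0 => //; apply: mulr_ge0; apply: ltW.
    nra.
  have ed : e = d - t by rewrite /t opprB addrC subrK.
  have nB : forall x y, ip (x - y) (x - y) = ip x x - 2 * ip y x + ip y y.
    by move=> x y; rewrite !(gBl ipB) !(gBr ipB) (gC ipB x y); ring.
  rewrite ed nB ht.
  have hc := bc d.
  have id : q = 1 - 2 * rho * alpha + (rho * M) ^+ 2.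
    by rewrite /q /rho; field; rewrite gt_eqF.
  rewrite id; have hdd := ipP d.
  have : 2 * rho * alpha * ip d d <= 2 * rho * b d d.
    by nra.
  nra.
set r := Num.sqrt q.
have r0 : 0 <= r by exact: sqrtr_ge0.
have r1 : r < 1 by rewrite /r -sqrtr1 ltr_sqrt // ltr01.
have ncontr : forall w w', nn (Phi w - Phi w') <= r * nn (w - w').
  move=> w w'; rewrite /Aux.nn /r -sqrtrM // ler_sqrt; last first.
    by apply: mulr_ge0 => //; apply: ipP.
  exact: contr.
pose ws k := iter k Phi 0.
set D0 := nn (ws 1%N - ws 0%N).
have D00 : 0 <= D0 by exact: nn_ge0.
have dk : forall k, nn (ws k.+1 - ws k) <= r ^+ k * D0.
  elim=> [|k IH]; first by rewrite expr0 mul1r.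
  apply: (le_trans (ncontr _ _)); rewrite exprS -mulrA; apply: ler_wpM2l => //.
have tail : forall n k, (1 - r) * nn (ws (n + k)%N - ws n) <= D0 * r ^+ n * (1 - r ^+ k).
  move=> n; elim=> [|k IH].
    by rewrite addn0 subrr /Aux.nn (g0l ipB) sqrtr0 mulr0 expr0 subrr mulr0.
  have e1 : ws (n + k.+1)%N - ws n = (ws (n + k).+1 - ws (n + k)%N) + (ws (n + k)%N - ws n).
    by rewrite addnS addrA subrK.
  rewrite e1.
  have h1 := nn_tri ipB ipP (ws (n + k).+1 - ws (n + k)%N) (ws (n + k)%N - ws n).
  have h2 := dk (n + k)%N.
  rewrite exprD in h2.
  have h3 : (1 - r) * nn (ws (n + k).+1 - ws (n + k)%N + (ws (n + k)%N - ws n))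
     <= (1 - r) * (nn (ws (n + k).+1 - ws (n + k)%N) + nn (ws (n + k)%N - ws n)).
    by apply: ler_wpM2l => //; lra.
  have h4 : (1 - r) * nn (ws (n + k).+1 - ws (n + k)%N) <= (1 - r) * (r ^+ n * r ^+ k * D0).
    by apply: ler_wpM2l => //; lra.
  rewrite exprS.
  set X := r ^+ n in h2 h4 IH *; set Y := r ^+ k in h2 h4 IH *.
  set A := nn (ws (n + k).+1 - ws (n + k)%N) in h3 h4.
  set B := nn (ws (n + k)%N - ws n) in IH h3.
  set C := nn _ in h3 *.
  nra.
have tail2 : forall n m, (n <= m)%N -> (1 - r) * nn (ws m - ws n) <= D0 * r ^+ n.
  move=> n m nm; rewrite -(subnKC nm).
  apply: (le_trans (tail _ _)).
  have : 0 <= r ^+ (m - n) by apply: exprn_ge0.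
  have : 0 <= D0 * r ^+ n by apply: mulr_ge0 => //; apply: exprn_ge0.
  nra.
have cau : cauchyW ip ws.
  move=> e e0.
  set s := Num.sqrt e.
  have s0 : 0 < s by rewrite sqrtr_gt0.
  have eps0 : 0 < (1 - r) * s / (2 * D0 + 1).
    by apply: divr_gt0; [apply: mulr_gt0 => //; lra | lra].
  have [N HN] := geo r0 r1 eps0.
  exists N => m n Nm Nn.
  have -> : e = s ^+ 2 by rewrite sqr_sqrtr // ltW.
  rewrite -(nn_sq ipP).
  have h1 := tail2 _ _ Nm; have h2 := tail2 _ _ Nn.
  have e1 : ws m - ws n = (ws m - ws N) + (ws N - ws n) by rewrite addrA subrK.
  have h3 := nn_tri ipB ipP (ws m - ws N) (ws N - ws n).
  rewrite -e1 (nnB ipB (ws N)) in h3.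
  have rN : 0 <= r ^+ N by apply: exprn_ge0.
  have h4 : r ^+ N * (2 * D0 + 1) < (1 - r) * s by rewrite -ltr_pdivlMr //; lra.
  have h5 : (1 - r) * nn (ws m - ws n) < (1 - r) * s.
    have : (1 - r) * nn (ws m - ws n) <= (1 - r) * (nn (ws m - ws N) + nn (ws n - ws N)).
      by apply: ler_wpM2l => //; lra.
    nra.
  have h6 : nn (ws m - ws n) < s by rewrite -(ltr_pM2l (_ : 0 < 1 - r)) //; lra.
  have := nn_ge0 ip (ws m - ws n); nra.
have [w Hw] := ipC cau.
have hfix : Phi w = w.
  have z : nn (Phi w - w) <= 0.
    apply/ler_addgt0Pr => e e0; rewrite add0r.
    have e2 : 0 < e / 2 by lra.
    have [N HN] := limW_nn ipP Hw e2.
    have e1 : Phi w - w = (Phi w - Phi (ws N)) + (ws N.+1 - w) by rewrite addrA subrK.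
    rewrite e1; apply: (le_trans (nn_tri ipB ipP _ _)).
    have h1 := ncontr w (ws N).
    rewrite (nnB ipB w) in h1.
    have h2 := HN N (leqnn N); have h3 := HN N.+1 (leqnSn N).
    have := nn_ge0 ip (ws N - w).
    nra.
  have : ip (Phi w - w) (Phi w - w) = 0.
    rewrite -(nn_sq ipP); have := nn_ge0 ip (Phi w - w); move=> h.
    have -> : nn (Phi w - w) = 0 by lra.
    by rewrite expr0n.
  by move/ipD/eqP; rewrite subr_eq0 => /eqP.
exists w => v.
have := HPhi w v; rewrite hfix => h.
have : rho * (b w v - f v) = 0 by lra.
move/eqP; rewrite mulf_eq0 gt_eqF //= subr_eq0 => /eqP //.
Qed.

End LM.


Section Inst.
Variables (R : realType) (s : nat) (V : lmodType R) (l2 h1 : V -> V -> R)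
  (ht : R) (mu : nat).
Hypotheses (l2B : sym_bilinear l2) (h1B : sym_bilinear h1)
  (l2pos : forall u, u != 0 -> 0 < l2 u u) (h1P : forall u, 0 <= h1 u u)
  (htp : 0 < ht).
Hypothesis Vcomp : forall un : nat -> V,
  (forall e : R, 0 < e -> exists N : nat, forall m n : nat,
     (N <= m)%N -> (N <= n)%N -> Vnorm l2 h1 ht mu (un m - un n) < e) ->
  exists v : V, forall e : R, 0 < e -> exists N : nat, forall n : nat,
     (N <= n)%N -> Vnorm l2 h1 ht mu (un n - v) < e.

Lemma hp : 0 < ht ^+ mu. Proof. exact: exprn_gt0. Qed.

Lemma l2P : psdf l2.
Proof.
move=> x; have [->|x0] := eqVneq x 0; first by rewrite (g0l l2B).
exact: ltW (l2pos x0).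
Qed.

Definition hs (x y : V) := ht ^+ mu * h1 x y.
Lemma hsB : sym_bilinear hs.
Proof.
split; first by move=> u v; rewrite /hs (gC h1B).
by move=> a u w v; rewrite /hs; case: h1B => _ ->; ring.
Qed.
Lemma hsP : psdf hs.
Proof. by move=> x; apply: mulr_ge0; [apply: ltW; apply: hp | apply: h1P]. Qed.

Definition gV (x y : V) := l2 x y + hs x y.
Lemma gVB : sym_bilinear gV.
Proof.
split; first by move=> u v; rewrite /gV (gC l2B) (gC hsB).
move=> a u w v; rewrite /gV; case: l2B => _ ->; case: hsB => _ ->; ring.
Qed.
Lemma gVP : psdf gV.
Proof. by move=> x; apply: addr_ge0; [apply: l2P | apply: hsP]. Qed.

Lemma VnormE x : Vnorm l2 h1 ht mu x = Num.sqrt (gV x x).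
Proof. by []. Qed.

Definition ipW (u v : 'I_s -> V) := \sum_i gV (u i) (v i).

Lemma ipWB : sym_bilinear ipW.
Proof.
split; first by move=> u v; apply: eq_bigr => i _; rewrite (gC gVB).
move=> a u w v; rewrite /ipW mulr_sumr -big_split /=; apply: eq_bigr => i _.
by case: gVB => _ ->.
Qed.

Lemma ipWP : psdf ipW.
Proof. by move=> u; apply: sum_ge0 => i; apply: gVP. Qed.

Lemma term_le (u : 'I_s -> V) i : gV (u i) (u i) <= ipW u u.
Proof.
rewrite /ipW (bigD1 i) //= lerDl; apply: sumr_ge0 => j _; apply: gVP.
Qed.

Lemma ipWD u : ipW u u = 0 -> u = 0.
Proof.
move=> /eqP; rewrite psumr_eq0 => [h|i _]; last exact: gVP.
apply: funext => i; have /allP /(_ i (mem_index_enum i)) := h.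
rewrite implyTb /gV => /eqP e.
have h2 := l2P (u i); have h3 := hsP (u i).
apply/eqP; apply: contraT => ui; have := l2pos ui; rewrite /hs in e h3; lra.
Qed.

Lemma VSnormE u : VSnorm l2 h1 ht mu u = nn ipW u.
Proof.
rewrite /VSnorm /nn /ipW; congr Num.sqrt; apply: eq_bigr => i _.
by rewrite VnormE sqr_sqrtr //; apply: gVP.
Qed.

Lemma ipWC un : cauchyW ipW un -> exists v, limW ipW un v.
Proof.
move=> hc.
have comp : forall i, exists vi, forall e : R, 0 < e -> exists N : nat,
    forall n : nat, (N <= n)%N -> Vnorm l2 h1 ht mu (un n i - vi) < e.
  move=> i; apply: Vcomp => e e0.
  have [N HN] := hc (e ^+ 2) (exprn_gt0 2 e0).
  exists N => m n Nm Nn; have := HN m n Nm Nn.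
  have := term_le (un m - un n) i.
  rewrite VnormE => h1' h2'.
  have h3 : gV (un m i - un n i) (un m i - un n i) < e ^+ 2 by exact: le_lt_trans h1' h2'.
  have := sqrtr_ge0 (gV (un m i - un n i) (un m i - un n i)).
  have := sqr_sqrtr (gVP (un m i - un n i)).
  set q := Num.sqrt _; nra.
have [v Hv] := choice comp.
exists v => e e0.
set d := Num.sqrt (e / (s%:R + 1)).
have ds : 0 < e / (s%:R + 1) by apply: divr_gt0 => //; rewrite ltr_pwDr // ler0n.
have d0 : 0 < d by rewrite sqrtr_gt0.
have [Nf HNf] := choice (fun i => Hv i d d0).
exists (\max_(i < s) Nf i) => n Nn.
have hi : forall i, gV (un n i - v i) (un n i - v i) <= e / (s%:R + 1).
  move=> i; have := HNf i n (leq_trans (leq_bigmax i) Nn).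
  rewrite VnormE -/d => h.
  rewrite -(sqr_sqrtr (ltW ds)) -/d -(sqr_sqrtr (gVP _)).
  have := sqrtr_ge0 (gV (un n i - v i) (un n i - v i)); nra.
apply: (le_lt_trans (ler_sum _ (fun i _ => hi i))).
set c := e / (s%:R + 1).
have sp : 0 <= s%:R :> R by rewrite ler0n.
have ce : c * (s%:R + 1) = e by rewrite /c divfK // gt_eqF // ltr_pwDr.
rewrite sumr_const card_ord -mulr_natl.
have c0 : 0 < c by [].
nra.
Qed.


Lemma gbound (W : lmodType R) (g : W -> W -> R) : sym_bilinear g -> psdf g ->
  forall x y (X Y : R), 0 <= X -> 0 <= Y -> g x x <= X ^+ 2 -> g y y <= Y ^+ 2 ->
  `|g x y| <= X * Y.
Proof.
move=> gB gP x y X Y X0 Y0 hx hy.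
have h := gCS gB gP x y.
have gx := gP x; have gy := gP y.
apply: sq_le; first exact: mulr_ge0.
rewrite real_normK ?num_real //; nra.
Qed.

Local Notation nW := (nn ipW).

Lemma l2_le u i : l2 (u i) (u i) <= nW u ^+ 2.
Proof. rewrite nn_sq; last exact: ipWP. have := term_le u i; have := hsP (u i); rewrite /gV; lra. Qed.
Lemma hs_le u i : hs (u i) (u i) <= nW u ^+ 2.
Proof. rewrite nn_sq; last exact: ipWP. have := term_le u i; have := l2P (u i); rewrite /gV; lra. Qed.

Variables (A C : 'M[R]_s).

Lemma opAE u v : opA A l2 h1 ht mu u v =
  \sum_i l2 (u i) (v i) + \sum_i \sum_j A i j * hs (u j) (v i).
Proof.
rewrite /opA mulr_sumr; congr (_ + _); apply: eq_bigr => i _.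
rewrite mulr_sumr; apply: eq_bigr => j _; rewrite /hs; ring.
Qed.

Definition c1 := s%:R + \sum_i \sum_j `|A i j|.

Lemma opA_bound u v : `|opA A l2 h1 ht mu u v| <= c1 * nW u * nW v.
Proof.
rewrite opAE /c1 mulrDl mulrDl.
have nu := nn_ge0 ipW u; have nv := nn_ge0 ipW v.
apply: (le_trans (ler_normD _ _)); apply: lerD.
  apply: (le_trans (ler_norm_sum _ _ _)).
  apply: (@le_trans _ _ (\sum_(i<s) nW u * nW v)).
    apply: ler_sum => i _; apply: (gbound l2B l2P) => //; apply: l2_le.
  by rewrite sumr_const card_ord -mulrA mulr_natl.
apply: (le_trans (ler_norm_sum _ _ _)).
rewrite -mulrA mulr_suml; apply: ler_sum => i _.
apply: (le_trans (ler_norm_sum _ _ _)).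
rewrite mulr_suml; apply: ler_sum => j _.
rewrite normrM; apply: ler_wpM2l => //.
apply: (gbound hsB hsP) => //; apply: hs_le.
Qed.

Definition Cm (w : 'I_s -> V) : 'I_s -> V := fun i => \sum_k C i k *: w k.

Lemma CmL a v w : Cm (a *: v + w) = a *: Cm v + Cm w.
Proof.
apply: funext => i.
change (\sum_k C i k *: (a *: v k + w k) = a *: (\sum_k C i k *: v k) + \sum_k C i k *: w k).
rewrite scaler_sumr -big_split /=.
apply: eq_bigr => k _; rewrite scalerDr !scalerA mulrC //.
Qed.

Lemma fZDE (a : R) (u w : 'I_s -> V) i : (a *: u + w) i = a *: u i + w i.
Proof. by []. Qed.

Lemma opA_l a u w v : opA A l2 h1 ht mu (a *: u + w) v =
  a * opA A l2 h1 ht mu u v + opA A l2 h1 ht mu w v.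
Proof.
rewrite !opAE.
have -> : \sum_i l2 ((a *: u + w) i) (v i) = \sum_i (a * l2 (u i) (v i) + l2 (w i) (v i)).
  by apply: eq_bigr => i _; rewrite fZDE; case: l2B => _ ->.
have -> : \sum_i \sum_j A i j * hs ((a *: u + w) j) (v i) =
   \sum_i (a * \sum_j A i j * hs (u j) (v i) + \sum_j A i j * hs (w j) (v i)).
  apply: eq_bigr => i _; rewrite mulr_sumr -big_split /=; apply: eq_bigr => j _.
  by rewrite fZDE; case: hsB => _ ->; ring.
rewrite !big_split /= -!mulr_sumr; ring.
Qed.

Lemma opA_r u : linf (opA A l2 h1 ht mu u).
Proof.
move=> a v w; rewrite !opAE /=.
have -> : \sum_i l2 (u i) ((a *: v + w) i) = \sum_i (a * l2 (u i) (v i) + l2 (u i) (w i)).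
  by apply: eq_bigr => i _; rewrite fZDE (gDr l2B) (gZr l2B).
have -> : \sum_i \sum_j A i j * hs (u j) ((a *: v + w) i) =
   \sum_i (a * \sum_j A i j * hs (u j) (v i) + \sum_j A i j * hs (u j) (w i)).
  apply: eq_bigr => i _; rewrite mulr_sumr -big_split /=; apply: eq_bigr => j _.
  by rewrite fZDE (gDr hsB) (gZr hsB); ring.
rewrite !big_split /= -!mulr_sumr; ring.
Qed.

Hypothesis Csym : forall i k, C i k = C k i.

Lemma opA_C u : opA A l2 h1 ht mu u (Cm u) = qf C l2 u + qf (C *m A) hs u.
Proof.
rewrite opAE /qf /Cm; congr (_ + _).
  apply: eq_bigr => i _; rewrite (gsumr l2B); apply: eq_bigr => k _.
  by rewrite (gZr l2B).
have -> : \sum_i \sum_j A i j * hs (u j) (\sum_k C i k *: u k) =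
   \sum_i \sum_j \sum_k A i j * C i k * hs (u j) (u k).
  apply: eq_bigr => i _; apply: eq_bigr => j _.
  rewrite (gsumr hsB) mulr_sumr; apply: eq_bigr => k _; rewrite (gZr hsB); ring.
rewrite exchange_big /=.
have -> : \sum_j \sum_i \sum_k A i j * C i k * hs (u j) (u k) =
   \sum_j \sum_k (C *m A) k j * hs (u j) (u k).
  apply: eq_bigr => j _; rewrite exchange_big /=; apply: eq_bigr => k _.
  rewrite mxE mulr_suml; apply: eq_bigr => i _; rewrite Csym; ring.
rewrite [RHS]exchange_big /=; apply: eq_bigr => j _; apply: eq_bigr => k _.
by rewrite (gC hsB).
Qed.

Variables (lam : R) (lamp : 0 < lam).
Hypothesis HcC : forall u : 'I_s -> V, lam * \sum_i l2 (u i) (u i) <= qf C l2 u.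
Hypothesis HcCA : forall u : 'I_s -> V, lam * \sum_i hs (u i) (u i) <= qf (C *m A) hs u.

Lemma coercA u : lam * ipW u u <= opA A l2 h1 ht mu u (Cm u).
Proof.
rewrite opA_C /ipW /gV big_split /= mulrDr.
by apply: lerD; [apply: HcC | apply: HcCA].
Qed.

Variables (cC : R) (cC0 : 0 <= cC).
Hypothesis HK : forall w : 'I_s -> V, ipW (Cm w) (Cm w) <= cC * ipW w w.

Lemma nnC w : nW (Cm w) <= Num.sqrt cC * nW w.
Proof.
by rewrite /nn -sqrtrM // ler_sqrt ?HK //; apply: mulr_ge0 => //; apply: ipWP.
Qed.

Hypothesis Cu : C \in unitmx.

Lemma CmK v : Cm (fun j => \sum_l invmx C j l *: v l) = v.
Proof.
apply: funext => i; rewrite /Cm.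
under eq_bigr do rewrite scaler_sumr.
rewrite exchange_big /=.
transitivity (\sum_l (C *m invmx C) i l *: v l).
  apply: eq_bigr => l _; rewrite mxE scaler_suml; apply: eq_bigr => k _.
  by rewrite scalerA.
rewrite mulmxV // (bigD1 i) //= big1 => [|l li].
  by rewrite mxE eqxx mulr1n scale1r addr0.
by rewrite mxE eq_sym (negbTE li) mulr0n scale0r.
Qed.

Lemma c1_ge0 : 0 <= c1.
Proof.
rewrite /c1; apply: addr_ge0; first by rewrite ler0n.
by apply: sumr_ge0 => i _; apply: sumr_ge0 => j _; apply: normr_ge0.
Qed.

Lemma main_inst :
  let nrm := VSnorm l2 h1 ht mu in
  let a := opA A l2 h1 ht mu in
  (forall u v : 'I_s -> V, `|a u v| <= c1 * nrm u * nrm v) /\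
  (forall f : ('I_s -> V) -> R, in_dual l2 h1 ht mu f ->
     exists u : 'I_s -> V, forall v, a u v = f v) /\
  (forall u : 'I_s -> V, (forall v, a u v = 0) -> u = (fun _ => 0)) /\
  (forall (u : 'I_s -> V) (M : R), 0 <= M ->
     (forall v, `|a u v| <= M * nrm v) -> nrm u <= Num.sqrt cC / lam * M).
Proof.
move=> nrm a.
have NE : forall u, nrm u = nW u by move=> u; rewrite /nrm VSnormE.
have bnd : forall (u : 'I_s -> V) (M : R), 0 <= M ->
     (forall v, `|a u v| <= M * nrm v) -> nrm u <= Num.sqrt cC / lam * M.
  move=> u M M0 hM.
  have h1' := coercA u.
  have h2 := hM (Cm u); rewrite NE in h2.
  have h3 := nnC u.
  have h4 := ler_norm (a u (Cm u)).
  rewrite NE -(nn_sq ipWP) in h1' *.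
  have x0 := nn_ge0 ipW u.
  have sc := sqrtr_ge0 cC.
  have h5 : M * nW (Cm u) <= M * (Num.sqrt cC * nW u) by apply: ler_wpM2l.
  have h6 : lam * nW u ^+ 2 <= M * Num.sqrt cC * nW u.
    rewrite /a in h2 h4; rewrite mulrA in h5; lra.
  rewrite mulrAC ler_pdivlMr //.
  have [->|xp] := eqVneq (nW u) 0; first by rewrite mul0r; apply: mulr_ge0.
  have xp' : 0 < nW u by rewrite lt_def xp x0.
  rewrite -(ler_pM2r xp'); nra.
split.
  by move=> u v; rewrite !NE; apply: opA_bound.
split.
  move=> f [fl [M fM]].
  have flW : linf f by move=> c u w; exact: fl c u w.
  set g := fun w => f (Cm w).
  have gl : linf g by move=> c u w; rewrite /g CmL flW.
  have gb : forall w, `|g w| <= (`|M| * Num.sqrt cC) * nW w.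
    move=> w; rewrite /g; apply: (le_trans (fM _)); rewrite VSnormE -mulrA.
    apply: (le_trans (_ : _ <= `|M| * nW (Cm w))).
      by apply: ler_wpM2r; [apply: nn_ge0 | apply: ler_norm].
    by apply: ler_wpM2l; [apply: normr_ge0 | apply: nnC].
  have sc := sqrtr_ge0 cC.
  have c10 := c1_ge0.
  have blW : forall c u w v, a (c *: u + w) (Cm v) = c * a u (Cm v) + a w (Cm v).
    by move=> c u w v; apply: opA_l.
  have brW : forall u, linf (fun w => a u (Cm w)).
    by move=> u c v w; rewrite /= CmL; apply: opA_r.
  have bMW : forall u w, `|a u (Cm w)| <= (c1 * Num.sqrt cC + lam) * nW u * nW w.
    move=> u w.
    have := opA_bound u (Cm w); rewrite -/a => h.
    have hC := nnC w; have nu := nn_ge0 ipW u; have nw := nn_ge0 ipW w.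
    have nc := nn_ge0 ipW (Cm w).
    apply: (le_trans h).
    have : c1 * nW u * nW (Cm w) <= c1 * nW u * (Num.sqrt cC * nW w).
      by apply: ler_wpM2l => //; apply: mulr_ge0.
    have : 0 <= lam * nW u * nW w by apply: mulr_ge0 => //; apply: mulr_ge0 => //; apply: ltW.
    nra.
  have aM : lam <= c1 * Num.sqrt cC + lam.
    have : 0 <= c1 * Num.sqrt cC by apply: mulr_ge0.
    lra.
  have [u Hu] := laxmilgram ipWB ipWP ipWD ipWC blW brW bMW lamp aM coercA gl gb.
  exists u => v; have := Hu (fun j => \sum_l invmx C j l *: v l).
  by rewrite /g CmK.
split; last exact: bnd.
move=> u h0.
have hz : forall v, `|a u v| <= 0 * nrm v by move=> v; rewrite h0 normr0 mul0r.
have := bnd u 0 (lexx 0) hz; rewrite mulr0 NE => hn.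
have e : nW u = 0 by apply/eqP; rewrite eq_le hn /=; exact: (nn_ge0 ipW u).
apply: ipWD; rewrite -(nn_sq ipWP) e expr0n //.
Qed.
End Inst.

End Aux.
Import Aux.
Unset Implicit Arguments.

Theorem theorem3p1 (R : realType) (s : nat) (A : 'M[R]_s) :
  weakly_pos_def A ->
  exists c1 c2 : R,
    forall (mu : nat) (ht : R), (mu = 1%N \/ mu = 2%N) -> 0 < ht ->
    forall (V : lmodType R) (l2 h1 : V -> V -> R),
      hilbert_setting l2 h1 ht mu ->
      let nrm := VSnorm l2 h1 ht mu in
      let a := opA A l2 h1 ht mu in
      (* ||A||_{L(V,V dual)} <= c1 *)
      (forall u v : 'I_s -> V, `|a u v| <= c1 * nrm u * nrm v) /\
      (* A is onto V dual *)
      (forall f : ('I_s -> V) -> R, in_dual l2 h1 ht mu f ->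
         exists u : 'I_s -> V, forall v, a u v = f v) /\
      (* A is injective *)
      (forall u : 'I_s -> V, (forall v, a u v = 0) -> u = (fun _ => 0)) /\
      (* ||A^{-1}||_{L(V dual,V)} <= c2, i.e. ||u||_V <= c2 ||A u||_{V dual} *)
      (forall (u : 'I_s -> V) (M : R), 0 <= M ->
         (forall v, `|a u v| <= M * nrm v) -> nrm u <= c2 * M).
Proof.
move=> [C [CT [HC HCA]]].
have Csym : forall i k, C i k = C k i by move=> i k; rewrite -{1}CT mxE.
have [l1 [l1p Hl1]] := coerc HC.
have [l2' [l2p Hl2]] := coerc HCA.
pose lam := Num.min l1 l2'.
have lamp : 0 < lam by rewrite lt_min l1p l2p.
have lam1 : lam <= l1 by have := le_min lam l1 l2'; rewrite lexx => /esym /andP[].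
have lam2 : lam <= l2' by have := le_min lam l1 l2'; rewrite lexx => /esym /andP[].
have [Kf HKf] := choice (fun i => Kbound (fun k => C i k)).
pose cC := \sum_i Kf i.
have cC0 : 0 <= cC by apply: sumr_ge0 => i _; case: (HKf i).
have Cu : C \in unitmx.
  rewrite unitmxE unitfE; apply/negP => /det0P [v v0 vC].
  have := HC v^T; rewrite trmx_eq0 => /(_ v0).
  by rewrite trmxK vC mul0mx mxE ltxx.
exists (c1 A), (Num.sqrt cC / lam).
move=> mu ht _ htp V l2 h1 [l2B h1B l2pos h1P Vcomp].
apply: (main_inst l2B h1B l2pos h1P htp Vcomp Csym lamp _ _ cC0 _ Cu).
- move=> u; have hS : 0 <= \sum_i l2 (u i) (u i).
    by apply: sumr_ge0 => i _; apply: (l2P l2B l2pos).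
  apply: le_trans (Hl1 V l2 l2B (l2P l2B l2pos) u).
  by apply: ler_wpM2r.
- move=> u; have hS : 0 <= \sum_i hs h1 ht mu (u i) (u i).
    by apply: sumr_ge0 => i _; apply: (hsP mu h1P htp).
  apply: le_trans (Hl2 V _ (hsB ht mu h1B) (hsP mu h1P htp) u).
  by apply: ler_wpM2r.
- move=> w; rewrite /ipW /cC mulr_suml; apply: ler_sum => i _.
  case: (HKf i) => _ Hi.
  apply: le_trans (Hi V _ (gVB ht mu l2B h1B) (gVP mu l2B l2pos h1P htp) w) _.
  done.
Qed.
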